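(* Let $n,m\ge 1$, let $\Lambda\in\mathbb{R}^{n\times n}$ be Schur stable (all eigenvalues in the open unit disk), and let $W_{\mathrm{in}}\in\mathbb{R}^{n\times m}$, $W_{\mathrm{out}}\in\mathbb{R}^{m\times n}$. Consider the discrete-time recurrent neural network \[ x(k+1)=\Lambda x(k)+W_{\mathrm{in}}w(k)+v(k),\quad z(k)=W_{\mathrm{out}}x(k),\quad w(k)=\Phi(z(k)+s(k)),\quad k=0,1,2,\dots, \] with $x(0)=0$, external inputs $s:\{0,1,\dots\}\to\mathbb{R}^m$, $v:\{0,1,\dots\}\to\mathbb{R}^n$, and $\Phi$ the entrywise ReLU. Suppose $\Pi\in\mathbb{S}^{2m}$ satisfies the IQC \[ \sum_{k=0}^{\tau}\begin{bmatrix}\xi(k)\\ \zeta(k)\end{bmatrix}^T\Pi\begin{bmatrix}\xi(k)\\ \zeta(k)\end{bmatrix}\ge 0\quad\text{for all }\tau\in\{0,1,2,\dots\} \] for every signal $\xi\in l_{2e}$ (with values in $\mathbb{R}^m$) and $\zeta=\Phi\xi$ (i.e. $\zeta(k)=\Phi(\xi(k))$). If there exist a positive semidefinite $P\in\mathbb{S}^n$ and a diagonal matrix $S\in\mathbb{R}^{m\times m}$ with strictly positive diagonal entries such that \[ \begin{bmatrix}-P&0\\0&-S\end{bmatrix}+\begin{bmatrix}\Lambda&W_{\mathrm{in}}\\ W_{\mathrm{out}}&0\end{bmatrix}^T\begin{bmatrix}P&0\\0&S\end{bmatrix}\begin{bmatrix}\Lambda&W_{\mathrm{in}}\\ W_{\mathrm{out}}&0\end{bmatrix}+\begin{bmatrix}W_{\mathrm{out}}&0\\0&I_m\end{bmatrix}^T\Pi\begin{bmatrix}W_{\mathrm{out}}&0\\0&I_m\end{bmatrix}\prec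 0, \] then the RNN is finite gain $l_2$ stable from the input $[s^T\ v^T]^T$ to the output $[z^T\ w^T]^T$, i.e. there exists $\gamma\ge 0$ such that $\|[z^T\ w^T]^T_\tau\|_2\le\gamma\|[s^T\ v^T]^T_\tau\|_2$ for all $s,v\in l_{2e}$ and all $\tau\ge 0$.
   Context: The ReLU $\Phi:\mathbb{R}^m\to\mathbb{R}^m$ is $\Phi(\xi)=[\phi(\xi_1),\dots,\phi(\xi_m)]^T$ with $\phi(\eta)=\eta$ for $\eta\ge0$ and $\phi(\eta)=0$ for $\eta<0$. $\mathbb{S}^k$ denotes real symmetric $k\times k$ matrices; $A\prec0$ means negative definite. For a discrete-time signal $w$ on $\{0,1,2,\dots\}$, $\|w\|_2=\sqrt{\sum_{k\ge0}|w(k)|_2^2}$ with $|\cdot|_2$ the Euclidean norm; $l_2=\{w:\|w\|_2<\infty\}$; the truncation $w_\tau$ is $w_\tau(k)=w(k)$ for $k\le\tau$ and $0$ for $k>\tau$; $l_{2e}=\{w: w_\tau\in l_2\ \forall\tau\ge0\}$. *)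

(* Defs.v *)
From HB Require Import structures.
From mathcomp Require Import all_boot all_order all_algebra.
From mathcomp Require Import complex.
Set Implicit Arguments. Unset Strict Implicit. Unset Printing Implicit Defensive.
Import Order.TTheory GRing.Theory Num.Theory.
Local Open Scope ring_scope.

Definition relu1 {R : realDomainType} (a : R) : R := if 0 <= a then a else 0.
Definition ReLU {R : realDomainType} {m : nat} (u : 'cV[R]_m) : 'cV[R]_m :=
  map_mx relu1 u.

Definition qform {R : pzRingType} {n : nat} (M : 'M[R]_n) (u : 'cV[R]_n) : R :=
  ((u^T *m M *m u) 0 0).

Definition symmetric_mx {R : pzRingType} {n : nat} (M : 'M[R]_n) := M^T = M.

Definition psd {R : realDomainType} {n : nat} (M : 'M[R]_n) :=
  symmetric_mx M /\ forall u : 'cV[R]_n, 0 <= qform M u.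

Definition neg_def {R : realDomainType} {n : nat} (M : 'M[R]_n) :=
  symmetric_mx M /\ forall u : 'cV[R]_n, u != 0 -> qform M u < 0.

Definition schur_stable {R : rcfType} {n : nat} (L : 'M[R]_n) :=
  forall z : R[i], root (map_poly (real_complex R) (char_poly L)) z ->
    `|z| < 1.

Definition sqnorm {R : pzRingType} {m : nat} (u : 'cV[R]_m) : R :=
  \sum_(i < m) u i 0 ^+ 2.

Definition trunc_norm {R : rcfType} {m : nat} (f : nat -> 'cV[R]_m) (tau : nat) : R :=
  Num.sqrt (\sum_(k < tau.+1) sqnorm (f k)).

Fixpoint rnn_x {R : realDomainType} {n m : nat} (L : 'M[R]_n) (Win : 'M[R]_(n, m))
  (Wout : 'M[R]_(m, n)) (s : nat -> 'cV[R]_m) (v : nat -> 'cV[R]_n) (k : nat)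
  : 'cV[R]_n :=
  match k with
  | 0 => 0
  | k'.+1 => let x := rnn_x L Win Wout s v k' in
             L *m x + Win *m ReLU (Wout *m x + s k') + v k'
  end.

Definition rnn_z {R : realDomainType} {n m : nat} (L : 'M[R]_n) (Win : 'M[R]_(n, m))
  (Wout : 'M[R]_(m, n)) (s : nat -> 'cV[R]_m) (v : nat -> 'cV[R]_n) (k : nat)
  : 'cV[R]_m := Wout *m rnn_x L Win Wout s v k.

Definition rnn_w {R : realDomainType} {n m : nat} (L : 'M[R]_n) (Win : 'M[R]_(n, m))
  (Wout : 'M[R]_(m, n)) (s : nat -> 'cV[R]_m) (v : nat -> 'cV[R]_n) (k : nat)
  : 'cV[R]_m := ReLU (rnn_z L Win Wout s v k + s k).

Definition relu_iqc {R : realDomainType} {m : nat} (Pi : 'M[R]_(m + m)) :=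
  forall (xi : nat -> 'cV[R]_m) (tau : nat),
    0 <= \sum_(k < tau.+1) qform Pi (col_mx (xi k) (ReLU (xi k))).

(* Main.v *)
Require Import Defs.
From HB Require Import structures.
From mathcomp Require Import all_boot all_order all_algebra.
From mathcomp Require Import complex ring lra.
Import Order.TTheory GRing.Theory Num.Theory.
Local Open Scope ring_scope.

Section Basic.
Variable R : rcfType.

Definition bil {p q} (A : 'M[R]_(p,q)) (a : 'cV[R]_p) (b : 'cV[R]_q) : R :=
  (a^T *m A *m b) 0 0.

Lemma bilE p q (A : 'M[R]_(p,q)) a b :
  bil A a b = \sum_(i < p) \sum_(j < q) a i 0 * A i j * b j 0.
Proof.
rewrite /bil mxE.
under eq_bigr => j _ do rewrite mxE big_distrl /=.
rewrite exchange_big /=; apply: eq_bigr => i _; apply: eq_bigr => j _.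
by rewrite mxE.
Qed.

Lemma qformE n (M : 'M[R]_n) u : qform M u = bil M u u.
Proof. by []. Qed.

Lemma bilDm p q (A B : 'M[R]_(p,q)) a b : bil (A + B) a b = bil A a b + bil B a b.
Proof. by rewrite /bil mulmxDr mulmxDl mxE. Qed.
Lemma bilNm p q (A : 'M[R]_(p,q)) a b : bil (- A) a b = - bil A a b.
Proof. by rewrite /bil mulmxN mulNmx mxE. Qed.
Lemma bilDl p q (A : 'M[R]_(p,q)) a a' b : bil A (a + a') b = bil A a b + bil A a' b.
Proof. by rewrite /bil linearD /= !mulmxDl mxE. Qed.
Lemma bilDr p q (A : 'M[R]_(p,q)) a b b' : bil A a (b + b') = bil A a b + bil A a b'.
Proof. by rewrite /bil mulmxDr mxE. Qed.
Lemma bil_mul p q p' q' (A : 'M[R]_(p,q)) (G : 'M[R]_(p,p')) (H : 'M[R]_(q,q')) a b :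
  bil A (G *m a) (H *m b) = bil (G^T *m A *m H) a b.
Proof. by rewrite /bil trmx_mul !mulmxA. Qed.
Lemma bil_tr p q (A : 'M[R]_(p,q)) a b : bil A a b = bil A^T b a.
Proof.
rewrite /bil.
have -> : (a^T *m A *m b) 0 0 = (a^T *m A *m b)^T 0 0 by rewrite [in RHS]mxE.
by rewrite !trmx_mul trmxK mulmxA.
Qed.
Lemma bil_block p1 p2 q1 q2 (A : 'M[R]_(p1,q1)) (B : 'M[R]_(p1,q2))
  (C : 'M[R]_(p2,q1)) (D : 'M[R]_(p2,q2)) a1 a2 b1 b2 :
  bil (block_mx A B C D) (col_mx a1 a2) (col_mx b1 b2) =
  bil A a1 b1 + bil B a1 b2 + bil C a2 b1 + bil D a2 b2.
Proof.
rewrite /bil tr_col_mx mul_row_block !mul_row_col !mulmxDl [LHS]mxE [X in X + _ = _]mxE [X in _ + X = _]mxE; ring.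
Qed.
Lemma bil0m p q (a : 'cV[R]_p) (b : 'cV[R]_q) : bil 0 a b = 0.
Proof. by rewrite /bil mulmx0 mul0mx mxE. Qed.

Lemma sqnormE m (u : 'cV[R]_m) : sqnorm u = bil 1%:M u u.
Proof.
rewrite bilE /sqnorm; apply: eq_bigr => i _.
rewrite (bigD1 i) //= big1 ?addr0; first by rewrite mxE eqxx mulr1 expr2.
by move=> j /negPf ji; rewrite mxE eq_sym ji mulr0 mul0r.
Qed.

Lemma sqnorm_col p q (a : 'cV[R]_p) (b : 'cV[R]_q) :
  sqnorm (col_mx a b) = sqnorm a + sqnorm b.
Proof.
by rewrite /sqnorm big_split_ord /=; congr (_ + _); apply: eq_bigr => i _;
  rewrite ?col_mxEu ?col_mxEd.
Qed.

Lemma sqnorm_ge0 p (a : 'cV[R]_p) : 0 <= sqnorm a.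
Proof. by apply: sumr_ge0 => i _; rewrite sqr_ge0. Qed.

Arguments sqnorm_ge0 {p}.

Lemma sqnorm_entry p (a : 'cV[R]_p) i : a i 0 ^+ 2 <= sqnorm a.
Proof.
rewrite /sqnorm (bigD1 i) //= lerDl; apply: sumr_ge0 => j _; exact: sqr_ge0.
Qed.

Lemma young {x y e : R} : 0 <= x -> 0 <= y -> 0 < e -> x * y <= e * x ^+ 2 + y ^+ 2 / e.
Proof.
move=> hx hy he.
have h : 0 <= (e * x - y) ^+ 2 / e by rewrite divr_ge0 ?sqr_ge0 ?ltW.
have -> : e * x ^+ 2 + y ^+ 2 / e = (e * x - y) ^+ 2 / e + 2 * (x * y).
  by field; rewrite gt_eqF.
nra.
Qed.

Lemma bil_small p q (A : 'M[R]_(p,q)) (d : R) : 0 < d ->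
  exists C, 0 <= C /\ forall a b, `|bil A a b| <= d * sqnorm a + C * sqnorm b.
Proof.
move=> hd.
set K := \sum_(i < p) \sum_(j < q) `|A i j|.
have K0 : 0 <= K by apply: sumr_ge0 => i _; apply: sumr_ge0 => j _.
set e := d / (K + 1).
have e0 : 0 < e by rewrite divr_gt0 // ltr_wpDl.
exists (K / e); split; first by rewrite divr_ge0 // ltW.
move=> a b; rewrite bilE.
apply: (le_trans (ler_norm_sum _ _ _)).
have step : forall i, `|\sum_(j < q) a i 0 * A i j * b j 0| <=
   \sum_(j < q) `|A i j| * (e * sqnorm a + sqnorm b / e).
  move=> i; apply: (le_trans (ler_norm_sum _ _ _)); apply: ler_sum => j _.
  rewrite !normrM [`|a i 0| * _]mulrC -mulrA ler_wpM2l //.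
  apply: (le_trans (young (normr_ge0 _) (normr_ge0 _) e0)).
  rewrite !real_normK ?num_real //.
  by apply: lerD; [apply: ler_wpM2l; [exact: ltW|exact: sqnorm_entry] | apply: ler_wpM2r; [rewrite invr_ge0 ltW // | exact: sqnorm_entry]].
apply: (le_trans (ler_sum _ (fun i _ => step i))).
under eq_bigr => i _ do rewrite -big_distrl.
rewrite -big_distrl /= -/K mulrDr.
apply: lerD; last by rewrite mulrA mulrAC.
rewrite mulrA ler_wpM2r ?sqnorm_ge0 // /e mulrA ler_pdivrMr ?ltr_wpDl //.
nra.
Qed.


Lemma bilx0 p q (A : 'M[R]_(p,q)) a : bil A a 0 = 0.
Proof. by rewrite /bil mulmx0 mxE. Qed.
Lemma bil0x p q (A : 'M[R]_(p,q)) b : bil A 0 b = 0.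
Proof. by rewrite /bil trmx0 !mul0mx mxE. Qed.

Arguments bil_small {p q}.

Lemma bilZm p q (x : R) (A : 'M[R]_(p,q)) a b : bil (x *: A) a b = x * bil A a b.
Proof. by rewrite /bil -scalemxAr -scalemxAl mxE. Qed.

Lemma bil11 (a : 'M[R]_1) (t t' : 'cV[R]_1) : bil a t t' = t 0 0 * a 0 0 * t' 0 0.
Proof. by rewrite bilE !big_ord1. Qed.

Lemma bil1l q (b : 'M[R]_(1,q)) (t : 'cV[R]_1) y : bil b t y = t 0 0 * (b *m y) 0 0.
Proof.
rewrite bilE big_ord1 mxE mulr_sumr; apply: eq_bigr => j _; by rewrite mulrA.
Qed.

Lemma sqnorm1 (t : 'cV[R]_1) : sqnorm t = t 0 0 ^+ 2.
Proof. by rewrite /sqnorm big_ord1. Qed.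

Lemma scal_step (A K1 e' e tau h sy Q : R) : 0 < A -> 0 <= sy -> 0 < e' ->
  A^+2 * h^+2 <= K1 * sy -> Q <= - e' * sy -> 0 < e -> e * 2 <= A ->
  e * (2 * K1 + A^+2) <= e' * A^+2 ->
  - A * (tau + h)^+2 + Q <= - e * (tau^+2 + sy).
Proof.
move=> A0 sy0 e'0 hK hQ e0 eA eK.
have h1 : tau^+2 <= 2 * (tau + h)^+2 + 2 * h^+2.
  have := sqr_ge0 (tau + 2 * h); lra.
have h2 : e * (2 * h^+2 + sy) * A^+2 <= e' * sy * A^+2.
  have : e * (2 * (A^+2 * h^+2) + A^+2 * sy) <= e * (2 * (K1 * sy) + A^+2 * sy).
    apply: ler_wpM2l; first exact: ltW.
    by rewrite lerD2r; apply: ler_wpM2l.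
  have : e * (2 * K1 + A^+2) * sy <= e' * A^+2 * sy by rewrite ler_wpM2r.
  lra.
have h3 : e * (2 * h^+2 + sy) <= e' * sy.
  by rewrite -(ler_pM2r (_ : 0 < A^+2)) ?exprn_gt0.
have h4 : e * (2 * (tau + h)^+2) <= A * (tau + h)^+2.
  by rewrite mulrA ler_wpM2r ?sqr_ge0.
nra.
Qed.

Lemma negdef_eps N (M : 'M[R]_N) : M^T = M -> (forall u, u != 0 -> qform M u < 0) ->
  exists e, 0 < e /\ forall u, qform M u <= - e * sqnorm u.
Proof.
elim: N M => [|N IH] M Msym Mneg.
  exists 1; split => // u.
  by rewrite qformE bilE /sqnorm !big_ord0 mulr0.
have eM : M = block_mx (ulsubmx (M : 'M_(1+N))) (ursubmx (M : 'M_(1+N)))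
           (dlsubmx (M : 'M_(1+N))) (drsubmx (M : 'M_(1+N))) by rewrite submxK.
move: Msym Mneg; rewrite eM.
set a := ulsubmx _; set b := ursubmx _; set c := dlsubmx _; set d := drsubmx _.
move=> Msym Mneg.
have [_ _ ecb edd] : [/\ a^T = a, c^T = b, b^T = c & d^T = d].
  by apply: eq_block_mx; rewrite -tr_block_mx.
have quad : forall (t : 'cV[R]_1) y, qform (block_mx a b c d) (col_mx t y) =
    a 0 0 * t 0 0 ^+ 2 + 2 * t 0 0 * (b *m y) 0 0 + bil d y y.
  move=> t y; rewrite qformE bil_block bil11 bil1l -ecb -bil_tr bil1l; ring.
set al := a 0 0.
have al0 : al < 0.
  have nz : (col_mx (1%:M : 'M[R]_1) (0 : 'cV[R]_N) : 'cV[R]_(1+N)) != 0.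
    rewrite col_mx_eq0 negb_and; apply/orP; left.
    by apply/negP => /eqP /matrixP /(_ 0 0); rewrite !mxE /= => /eqP; rewrite oner_eq0.
  have := Mneg _ nz.
  have e1 : (1%:M : 'M[R]_1) 0 0 = 1 by rewrite mxE.
  have e0 : (0 : 'M[R]_1) 0 0 = 0 by rewrite mxE.
  by rewrite quad mulmx0 bilx0 e1 e0 -/al expr1n mulr1 mulr0 !addr0.
have alN : al != 0 by rewrite lt_eqF.
set d' := d - al^-1 *: (b^T *m b).
have d'sym : d'^T = d'.
  by rewrite /d' linearB linearZ /= trmx_mul trmxK edd.
have bsq : forall y, bil (b^T *m b) y y = (b *m y) 0 0 ^+ 2.
  move=> y; have -> : b^T *m b = b^T *m 1%:M *m b by rewrite mulmx1.
  by rewrite -bil_mul bil11 [X in _ * X * _]mxE eqxx mulr1 expr2.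
have d'q : forall y, bil d' y y = bil d y y - al^-1 * (b *m y) 0 0 ^+ 2.
  by move=> y; rewrite /d' bilDm bilNm bilZm bsq.
have d'neg : forall y, y != 0 -> qform d' y < 0.
  move=> y ny.
  pose t : 'cV[R]_1 := (- (b *m y) 0 0 / al)%:M.
  have nz : (col_mx t y : 'cV[R]_(1+N)) != 0.
    by rewrite col_mx_eq0 negb_and ny orbT.
  have := Mneg _ nz; rewrite quad qformE d'q.
  have -> : t 0 0 = - (b *m y) 0 0 / al by rewrite mxE.
  set be := (b *m y) 0 0.
  have -> : al * (- be / al) ^+ 2 + 2 * (- be / al) * be + bil d y y =
            bil d y y - al^-1 * be ^+ 2 by field.
  by [].
have [e' [e'0 He']] := IH d' d'sym d'neg.
have [C [C0 HC]] := @bil_small _ _ (b^T *m b) 1 ltr01.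
set K1 := 1 + C.
set A := - al.
have A0 : 0 < A by rewrite oppr_gt0.
have den0 : 0 < 2 * K1 + A ^+ 2.
  apply: ltr_wpDl; last by rewrite exprn_gt0.
  by rewrite mulr_ge0 // addr_ge0.
exists (Num.min (A / 2) (e' * A ^+ 2 / (2 * K1 + A ^+ 2))); split.
  by rewrite lt_min divr_gt0 // divr_gt0 // mulr_gt0 // exprn_gt0.
suff H : forall (t : 'cV[R]_1) (y : 'cV[R]_N),
   qform (block_mx a b c d) (col_mx t y) <=
   - Num.min (A / 2) (e' * A ^+ 2 / (2 * K1 + A ^+ 2)) * sqnorm (col_mx t y).
  move=> u.
  have eu : u = col_mx (usubmx (u : 'cV[R]_(1+N))) (dsubmx (u : 'cV[R]_(1+N))).
    by rewrite vsubmxK.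
  rewrite eu; exact: H.
move=> t y.
rewrite sqnorm_col sqnorm1 quad.
set be := (b *m y) 0 0.
set h := be / al.
have -> : al * t 0 0 ^+ 2 + 2 * t 0 0 * be + bil d y y =
          - A * (t 0 0 + h) ^+ 2 + qform d' y.
  by rewrite qformE d'q -/be /h /A; field.
apply: (@scal_step A K1 e') => //.
- exact: sqnorm_ge0.
- have -> : A ^+ 2 * h ^+ 2 = be ^+ 2 by rewrite /h /A; field.
  rewrite -bsq; apply: le_trans (ler_norm _) _; apply: le_trans (HC y y) _.
  by rewrite /K1 mulrDl.
- by rewrite lt_min divr_gt0 // divr_gt0 // mulr_gt0 // exprn_gt0.
- by rewrite -ler_pdivlMr // ge_min lexx.
- rewrite -ler_pdivlMr // ge_min; apply/orP; right; exact: lexx.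
Qed.

Definition Small {N K} (f : 'cV[R]_N -> 'cV[R]_K -> R) :=
  forall d : R, 0 < d -> exists C, 0 <= C /\
    forall u r, `|f u r| <= d * sqnorm u + C * sqnorm r.

Lemma Small_add N K (f g : 'cV[R]_N -> 'cV[R]_K -> R) :
  Small f -> Small g -> Small (fun u r => f u r + g u r).
Proof.
move=> hf hg d d0.
have d20 : 0 < d / 2 by rewrite divr_gt0.
have [C1 [C10 H1]] := hf _ d20; have [C2 [C20 H2]] := hg _ d20.
exists (C1 + C2); split; first by rewrite addr_ge0.
move=> u r; apply: le_trans (ler_normD _ _) _.
have := H1 u r; have := H2 u r; have := sqnorm_ge0 u; have := sqnorm_ge0 r.
lra.
Qed.

Lemma Small_ur N K p q (A : 'M[R]_(p,q)) (G : 'M[R]_(p,N)) (H : 'M[R]_(q,K)) :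
  Small (fun u r => bil A (G *m u) (H *m r)).
Proof.
move=> d d0; have [C [C0 HC]] := bil_small (G^T *m A *m H) d d0.
by exists C; split => // u r; rewrite bil_mul.
Qed.

Lemma Small_ru N K p q (A : 'M[R]_(p,q)) (G : 'M[R]_(q,N)) (H : 'M[R]_(p,K)) :
  Small (fun u r => bil A (H *m r) (G *m u)).
Proof.
move=> d d0; have [C [C0 HC]] := bil_small (G^T *m A^T *m H) d d0.
by exists C; split => // u r; rewrite bil_tr bil_mul.
Qed.

Lemma Small_rr N K p q (A : 'M[R]_(p,q)) (H : 'M[R]_(p,K)) (H' : 'M[R]_(q,K)) :
  Small (fun (u : 'cV[R]_N) r => bil A (H *m r) (H' *m r)).
Proof.
move=> d d0; have [C [C0 HC]] := bil_small (H^T *m A *m H') 1 ltr01.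
exists (1 + C); split; first by rewrite addr_ge0.
move=> u r; rewrite bil_mul; apply: le_trans (HC r r) _.
have := sqnorm_ge0 u; have := sqnorm_ge0 r.
have : 0 <= d * sqnorm u by apply: mulr_ge0; [exact: ltW | exact: sqnorm_ge0].
lra.
Qed.

Lemma relu_diag m (S : 'M[R]_m) (xi : 'cV[R]_m) : is_diag_mx S -> (forall i, 0 < S i i) ->
  qform S (ReLU xi) <= qform S xi.
Proof.
move=> /is_diag_mxP Sd Sp.
have diagE : forall u : 'cV[R]_m, qform S u = \sum_i S i i * u i 0 ^+ 2.
  move=> u; rewrite qformE bilE; apply: eq_bigr => i _.
  rewrite (bigD1 i) //= big1 ?addr0; first by rewrite expr2; ring.
  by move=> j ji; rewrite Sd ?mulr0 ?mul0r // eq_sym.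
rewrite !diagE; apply: ler_sum => i _; apply: ler_wpM2l; first exact: ltW.
rewrite /ReLU mxE /relu1; case: ifP => // _.
by rewrite expr0n /= sqr_ge0.
Qed.

Section Step.
Variables (n m : nat) (L : 'M[R]_n) (Win : 'M[R]_(n, m)) (Wout : 'M[R]_(m, n))
  (Pi : 'M[R]_(m + m)) (P : 'M[R]_n) (S : 'M[R]_m).

Definition Mbig := block_mx (- P) 0 0 (- S)
   + (block_mx L Win Wout 0)^T *m block_mx P 0 0 S *m block_mx L Win Wout 0
   + (block_mx Wout 0 0 (1%:M : 'M[R]_m))^T *m Pi *m block_mx Wout 0 0 (1%:M : 'M[R]_m).

Definition Gy : 'M[R]_(n, n + m) := row_mx L Win.
Definition Gz : 'M[R]_(m, n + m) := row_mx Wout 0.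
Definition Ga : 'M[R]_(m + m, n + m) := block_mx Wout 0 0 1%:M.
Definition Hv : 'M[R]_(n, m + n) := row_mx 0 1%:M.
Definition Hs : 'M[R]_(m, m + n) := row_mx 1%:M 0.
Definition Hr : 'M[R]_(m + m, m + n) := col_mx Hs 0.

Definition Eterm (u : 'cV[R]_(n + m)) (r : 'cV[R]_(m + n)) :=
  bil P (Gy *m u) (Hv *m r) + bil P (Hv *m r) (Gy *m u) + bil P (Hv *m r) (Hv *m r)
  + bil Pi (Ga *m u) (Hr *m r) + bil Pi (Hr *m r) (Ga *m u) + bil Pi (Hr *m r) (Hr *m r)
  + bil S (Gz *m u) (Hs *m r) + bil S (Hs *m r) (Gz *m u) + bil S (Hs *m r) (Hs *m r).

Lemma Eterm_small : Small Eterm.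
Proof.
rewrite /Eterm.
apply: Small_add; last exact: Small_rr.
apply: Small_add; last exact: Small_ru.
apply: Small_add; last exact: Small_ur.
apply: Small_add; last exact: Small_rr.
apply: Small_add; last exact: Small_ru.
apply: Small_add; last exact: Small_ur.
apply: Small_add; last exact: Small_rr.
apply: Small_add; last exact: Small_ru.
exact: Small_ur.
Qed.

Lemma step_ineq (x : 'cV[R]_n) (s : 'cV[R]_m) (v : 'cV[R]_n) :
  is_diag_mx S -> (forall i, 0 < S i i) ->
  qform P (L *m x + Win *m ReLU (Wout *m x + s) + v) - qform P x
  + qform Pi (col_mx (Wout *m x + s) (ReLU (Wout *m x + s)))
  <= qform Mbig (col_mx x (ReLU (Wout *m x + s)))
     + Eterm (col_mx x (ReLU (Wout *m x + s))) (col_mx s v).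
Proof.
move=> Sd Sp.
set w := ReLU _.
set y := L *m x + Win *m w.
set z := Wout *m x.
have eGy : Gy *m col_mx x w = y by rewrite /Gy mul_row_col.
have eGz : Gz *m col_mx x w = z by rewrite /Gz mul_row_col mul0mx addr0.
have eGa : Ga *m col_mx x w = col_mx z w.
  by rewrite /Ga mul_block_col !mul0mx addr0 add0r mul1mx.
have eHv : Hv *m col_mx s v = v by rewrite /Hv mul_row_col mul0mx add0r mul1mx.
have eHs : Hs *m col_mx s v = s by rewrite /Hs mul_row_col mul0mx addr0 mul1mx.
have eHr : Hr *m col_mx s v = col_mx s 0 by rewrite /Hr mul_col_mx mul0mx eHs.
have eM : qform Mbig (col_mx x w) =
   - qform P x - qform S w + qform P y + qform S z + qform Pi (col_mx z w).
  rewrite /Mbig !qformE !bilDm -!bil_mul !mul_block_col !bil_block.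
  rewrite !mul0mx !addr0 add0r mul1mx !bil0m !bilNm -/y -/z; ring.
have hS := @relu_diag _ S (Wout *m x + s) Sd Sp.
rewrite -/w in hS.
have ecol : col_mx (z + s) w = col_mx z w + col_mx s 0 by rewrite add_col_mx addr0.
rewrite /Eterm eGy eGz eGa eHv eHs eHr eM ecol.
move: hS; rewrite !qformE !bilDl !bilDr -/z.
lra.
Qed.

End Step.

End Basic.
Arguments bil {R p q}.
Arguments sqnorm_ge0 {R p}.

Theorem theorem1 (R : rcfType) (n m : nat) (Hn : (0 < n)%N) (Hm : (0 < m)%N)
  (L : 'M[R]_n) (Win : 'M[R]_(n, m)) (Wout : 'M[R]_(m, n))
  (Pi : 'M[R]_(m + m)) :
  schur_stable L ->
  symmetric_mx Pi ->
  relu_iqc Pi ->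
  (exists (P : 'M[R]_n) (S : 'M[R]_m),
      psd P /\ is_diag_mx S /\ (forall i, 0 < S i i) /\
      neg_def (block_mx (- P) 0 0 (- S)
               + (block_mx L Win Wout 0)^T *m block_mx P 0 0 S *m block_mx L Win Wout 0
               + (block_mx Wout 0 0 (1%:M : 'M[R]_m))^T *m Pi
                   *m block_mx Wout 0 0 (1%:M : 'M[R]_m))) ->
  exists gamma : R, 0 <= gamma /\
    forall (s : nat -> 'cV[R]_m) (v : nat -> 'cV[R]_n) (tau : nat),
      trunc_norm (fun k => col_mx (rnn_z L Win Wout s v k) (rnn_w L Win Wout s v k)) tau
      <= gamma * trunc_norm (fun k => col_mx (s k) (v k)) tau.
Proof.
move=> _ _ iqc [P [S [[_ Ppsd] [Sd [Sp [Msym Mneg]]]]]].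
have [e [e0 He]] := @negdef_eps _ _ _ Msym Mneg.
have e20 : 0 < e / 2 by rewrite divr_gt0.
have [C [C0 HC]] := @Eterm_small _ _ _ L Win Wout Pi P S _ e20.
have [Cw [Cw0 HCw]] := @bil_small _ _ _ (Wout^T *m 1%:M *m Wout) 1 ltr01.
set G := (2 + Cw) * (2 * C / e).
have G0 : 0 <= G by rewrite mulr_ge0 ?addr_ge0 // divr_ge0 ?mulr_ge0 // ltW.
exists (Num.sqrt G); split; first exact: sqrtr_ge0.
move=> s v tau.
set X := rnn_x L Win Wout s v.
set W := rnn_w L Win Wout s v.
set IQC := fun k => qform Pi (col_mx (Wout *m X k + s k) (ReLU (Wout *m X k + s k))).
have step : forall k, qform P (X k.+1) - qform P (X k) + IQC k <=
    C * sqnorm (col_mx (s k) (v k)) - e / 2 * sqnorm (col_mx (X k) (W k)).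
  move=> k.
  have h1 := @step_ineq _ _ _ L Win Wout Pi P S (X k) (s k) (v k) Sd Sp.
  have h2 := He (col_mx (X k) (W k)).
  have h3 := HC (col_mx (X k) (W k)) (col_mx (s k) (v k)).
  have h4 := ler_norm (@Eterm _ _ _ L Win Wout Pi P S (col_mx (X k) (W k)) (col_mx (s k) (v k))).
  rewrite /IQC; move: h1 h2 h3 h4; rewrite /W /rnn_w /rnn_z.
  rewrite /Mbig -/X.
  have -> : X k.+1 = L *m X k + Win *m ReLU (Wout *m X k + s k) + v k by [].
  lra.
have sumI : forall t, qform P (X t) + \sum_(k < t) IQC k <=
    \sum_(k < t) (C * sqnorm (col_mx (s k) (v k)) - e / 2 * sqnorm (col_mx (X k) (W k))).
  elim => [|t IHt].
    have -> : X 0 = 0 by [].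
    by rewrite !big_ord0 qformE bil0x addr0.
  rewrite !big_ord_recr /=; have := step t; lra.
have key := sumI tau.+1.
have hP := Ppsd (X tau.+1).
have hI : 0 <= \sum_(k < tau.+1) IQC k by exact: (iqc (fun k => Wout *m X k + s k) tau).
rewrite sumrB -!mulr_sumr in key.
set SR := \sum_(k < tau.+1) sqnorm (col_mx (s k) (v k)) in key *.
set SU := \sum_(k < tau.+1) sqnorm (col_mx (X k) (W k)) in key.
have SR0 : 0 <= SR by apply: sumr_ge0 => k _; exact: sqnorm_ge0.
have hSU : SU <= 2 * C / e * SR.
  rewrite mulrAC ler_pdivlMr //; lra.
have hSO : \sum_(k < tau.+1) sqnorm (col_mx (rnn_z L Win Wout s v k) (W k)) <= (2 + Cw) * SU.
  rewrite /SU mulr_sumr; apply: ler_sum => k _; rewrite !sqnorm_col.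
  have -> : sqnorm (rnn_z L Win Wout s v k) = bil (Wout^T *m 1%:M *m Wout) (X k) (X k).
    by rewrite /rnn_z sqnormE bil_mul.
  have := le_trans (ler_norm _) (HCw (X k) (X k)).
  have := sqnorm_ge0 (X k); have := sqnorm_ge0 (W k).
  have := mulr_ge0 Cw0 (sqnorm_ge0 (W k)).
  lra.
rewrite /trunc_norm -/SR -sqrtrM // ler_sqrt ?mulr_ge0 //.
apply: le_trans hSO _; rewrite /G -(mulrA (2 + Cw)).
apply: ler_wpM2l => //.
all: try by rewrite addr_ge0.
all: by rewrite invr_ge0 ltW.
Qed.
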